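(* In the odd setting below, for all $i,j\in\{1,\dots,n\}$ and $\ell\in\{0,\dots,s-1\}$, the determinant $D^j_{2\ell+1,i}$ is homogeneous of degree $-1+\ell/s$.
   Context: Odd setting: integers $n\ge1$, $s\ge1$, $m=2s+1$; $a_k^0,\dots,a_k^{2s}$ are $n\times n$ matrices with indeterminate entries, $N$-periodic in $k$. $Q_k$ is the $mn\times mn$ block matrix with $I_n$ in blocks $(i+1,i)$, last block column $(a_k^0;\dots;a_k^{2s})$, $O_n$ elsewhere. $r_k=(a_k^0;O_n;a_k^2;O_n;\dots;O_n;a_k^{2s})$. $F^{(k)}_0=r_k$, $F^{(k)}_\ell=Q_k\cdots Q_{k+\ell-1}r_{k+\ell}$ ($mn\times n$), $N_k=(F^{(k)}_0,\dots,F^{(k)}_{2s})$. For $0\le \rho\le 2s$, $D^j_{\rho,i}$ (for a fixed $k$) is the determinant of the matrix obtained from $N_k$ by replacing the $i$-th column of the block column $F^{(k)}_\rho$ by the $j$-th column of $F^{(k)}_{2s+1}$. The scaling, for $\mu>0$: $a^{2r+1}\mapsto\mu^{-1+r/s}a^{2r+1}$ ($r=0,\dots,s-1$), $a^{2r}\mapsto\mu^{r/s}a^{2r}$ ($r=0,\dots,s$); homogeneous of degree $d$ means multiplied by $\mu^d$. *)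

(* Defs.v *)
From HB Require Import structures.
From mathcomp Require Import all_boot all_order all_algebra.
Set Implicit Arguments. Unset Strict Implicit. Unset Printing Implicit Defensive.
Import Order.TTheory GRing.Theory Num.Theory.
Local Open Scope ring_scope.

(* Odd setting: m = 2s+1.  Coefficient family: a k r = a_k^r (n x n),
   k : nat (time index, N-periodic), r : 'I_(2s+1).
   An mn x mn (resp. mn x n) matrix is indexed by p : 'I_(m*n); p lies in
   block row p %/ n (0-based), row p %% n inside that block.            *)

Definition msz (s : nat) : nat := s.*2.+1.

(* Block decomposition of an index p : 'I_(m*n) as (block, position):
   p = block * n + position (lexicographic enumeration of 'I_m * 'I_n). *)
Definition bix (m n : nat) (p : 'I_(m * n)) : 'I_m * 'I_n :=
  enum_val (cast_ord (esym (mxvec_cast m n)) p).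

Definition Qmx (R : fieldType) (n s : nat) (a : nat -> 'I_(msz s) -> 'M[R]_n)
  (k : nat) : 'M[R]_(msz s * n) :=
  \matrix_(p, q)
    let: (bp, rp) := bix p in let: (bq, rq) := bix q in
    if (val bq == (msz s).-1)%N then a k bp rp rq
    else if (val bp == (val bq).+1)%N then ((rp == rq))%:R else 0.

Definition rmx (R : fieldType) (n s : nat) (a : nat -> 'I_(msz s) -> 'M[R]_n)
  (k : nat) : 'M[R]_(msz s * n, n) :=
  \matrix_(p, j)
    let: (bp, rp) := bix p in if ~~ odd bp then a k bp rp j else 0.

Fixpoint Qprod (R : fieldType) (n s : nat) (a : nat -> 'I_(msz s) -> 'M[R]_n)
  (k l : nat) : 'M[R]_(msz s * n) :=
  match l with
  | O => 1%:M
  | l'.+1 => Qprod a k l' *m Qmx a (k + l')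
  end.

Definition Fmx (R : fieldType) (n s : nat) (a : nat -> 'I_(msz s) -> 'M[R]_n)
  (k l : nat) : 'M[R]_(msz s * n, n) :=
  Qprod a k l *m rmx a (k + l).

Definition Nmx (R : fieldType) (n s : nat) (a : nat -> 'I_(msz s) -> 'M[R]_n)
  (k : nat) : 'M[R]_(msz s * n) :=
  \matrix_(p, q) Fmx a k (val (bix q).1) p (bix q).2.

(* D^j_{rho,i}: determinant of N_k with the i-th column of block column F_rho
   replaced by the j-th column of F_{2s+1}  (i, j are 0-based in 'I_n). *)
Definition Ddet (R : fieldType) (n s : nat) (a : nat -> 'I_(msz s) -> 'M[R]_n)
  (k rho : nat) (i j : 'I_n) : R :=
  \det (\matrix_(p, q) if (val (bix q).1 == rho) && ((bix q).2 == i)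
                      then Fmx a k (msz s) p j
                      else Nmx a k p q).

(* The scaling with mu = t^s (t > 0):
   a^{2r+1} -> mu^{-1+r/s} a^{2r+1} = t^r / t^s a^{2r+1},
   a^{2r}   -> mu^{r/s}    a^{2r}   = t^r a^{2r}. *)
Definition scale_coef (R : fieldType) (n s : nat) (t : R)
  (a : nat -> 'I_(msz s) -> 'M[R]_n) : nat -> 'I_(msz s) -> 'M[R]_n :=
  fun k r => (if odd r then t ^+ (r./2) / t ^+ s else t ^+ (r./2)) *: a k r.

(* Main.v *)
Require Import Defs.
From HB Require Import structures.
From mathcomp Require Import all_boot all_order all_algebra.
From mathcomp Require Import zify ring lra.
Import Order.TTheory GRing.Theory Num.Theory.
Set Implicit Arguments. Unset Strict Implicit. Unset Printing Implicit Defensive.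
Local Open Scope ring_scope.



Lemma nth_allpairs_pair (T1 T2 : eqType) (x1 : T1) (x2 : T2) (s1 : seq T1) (s2 : seq T2) i j :
  (i < size s1)%N -> (j < size s2)%N ->
  nth (x1, x2) [seq (y1, y2) | y1 <- s1, y2 <- s2] (i * size s2 + j) = (nth x1 s1 i, nth x2 s2 j).
Proof.
elim: s1 i => [|y s1 IH] [|i] //= hi hj.
  by rewrite nth_cat size_map hj (nth_map x2).
rewrite nth_cat size_map mulSn -addnA ltnNge leq_addr /=.
by rewrite addKn IH.
Qed.
Lemma enum_prodE m n : enum {: 'I_m * 'I_n} = [seq (y1, y2) | y1 <- enum 'I_m, y2 <- enum 'I_n].
Proof. by rewrite enumT unlock. Qed.

Lemma val_mxvec_index m n (b : 'I_m) (r : 'I_n) : val (mxvec_index b r) = (b * n + r)%N.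
Proof.
have hlt : (b * n + r < #|{: 'I_m * 'I_n}|)%N.
  rewrite card_prod !card_ord.
  have := ltn_ord b; have := ltn_ord r; nia.
have he : enum_val (Ordinal hlt) = (b, r).
  rewrite (enum_val_nth (b, r)) /= enum_prodE.
  have := @nth_allpairs_pair _ _ b r (enum 'I_m) (enum 'I_n) b r.
  rewrite !size_enum_ord => ->; try exact: ltn_ord.
  by congr pair; apply: val_inj; rewrite /= nth_enum_ord.
by rewrite /mxvec_index -he enum_valK.
Qed.


Definition blk {m n} (q : 'I_(m*n)) : nat := val (bix q).1.
Definition pos {m n} (q : 'I_(m*n)) : 'I_n := (bix q).2.

Lemma bix_idx m n (b : 'I_m) (r : 'I_n) : bix (mxvec_index b r) = (b, r).
Proof. by rewrite /bix /mxvec_index cast_ordK enum_rankK. Qed.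

Lemma idx_bix m n (q : 'I_(m * n)) : mxvec_index (bix q).1 (bix q).2 = q.
Proof. by case/mxvec_indexP: q => b r; rewrite bix_idx. Qed.

Lemma blk_idx m n (b : 'I_m) (r : 'I_n) : blk (mxvec_index b r) = b.
Proof. by rewrite /blk bix_idx. Qed.
Lemma pos_idx m n (b : 'I_m) (r : 'I_n) : pos (mxvec_index b r) = r.
Proof. by rewrite /pos bix_idx. Qed.
Lemma blk_lt m n (q : 'I_(m*n)) : (blk q < m)%N.
Proof. exact: ltn_ord. Qed.

Lemma bix_inj m n : injective (@bix m n).
Proof. by move=> q q' h; rewrite -[q]idx_bix -[q']idx_bix h. Qed.

Lemma bix_eq m n (q q' : 'I_(m * n)) : (q == q') = (blk q == blk q')%N && (pos q == pos q').
Proof.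
rewrite -(inj_eq (@bix_inj m n)) /blk /pos.
by case: (bix q) => b r; case: (bix q') => b' r'.
Qed.

Lemma sum_bix (R : nmodType) m n (F : 'I_(m * n) -> R) :
  \sum_q F q = \sum_(b < m) \sum_(r < n) F (mxvec_index b r).
Proof.
rewrite pair_big /=.
rewrite (reindex (fun p : 'I_m * 'I_n => mxvec_index p.1 p.2)) //=.
exists (fun q => bix q) => [[b r] _ | q _] /=; first by rewrite bix_idx.
exact: idx_bix.
Qed.

Definition Emx (R : fieldType) (s n c : nat) : 'M[R]_(msz s * n, n) :=
  \matrix_(q, r) ((blk q == c) && (pos q == r))%:R.

Lemma Emx_idx (R : fieldType) s n c (hc : (c < msz s)%N) q r :
  Emx R s n c q r = (q == mxvec_index (@inord s.*2 c) r)%:R.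
Proof. by rewrite mxE bix_eq blk_idx pos_idx inordK. Qed.

Lemma mulmxE_r (R : fieldType) s n p (A : 'M[R]_(p, msz s * n)) c (hc : (c < msz s)%N) i r :
  (A *m Emx R s n c) i r = A i (mxvec_index (@inord s.*2 c) r).
Proof.
rewrite mxE (bigD1 (mxvec_index (@inord s.*2 c) r)) //= Emx_idx // eqxx mulr1.
rewrite big1 ?addr0 // => q hq; rewrite Emx_idx // (negbTE hq) mulr0 //.
Qed.

Lemma mulmxE_l (R : fieldType) s n p (A : 'M[R]_(n, p)) c q j :
  (Emx R s n c *m A) q j = if (blk q == c)%N then A (pos q) j else 0.
Proof.
rewrite mxE; case: eqP => hb.
  rewrite (bigD1 (pos q)) //= mxE hb !eqxx mul1r big1 ?addr0 // => r hr.
  by rewrite mxE hb eqxx /= eq_sym (negbTE hr) mul0r.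
by rewrite big1 // => r _; rewrite mxE; move/eqP: hb => /negbTE ->; rewrite mul0r.
Qed.

Lemma QmxE (R : fieldType) n s (a : nat -> 'I_(msz s) -> 'M[R]_n) k p q :
  Qmx a k p q = if (blk q == s.*2)%N then a k (bix p).1 (pos p) (pos q)
                else if (blk p == (blk q).+1)%N then (pos p == pos q)%:R else 0.
Proof. by rewrite mxE /blk /pos; case: (bix p) => bp rp; case: (bix q) => bq rq. Qed.

Lemma rmxE (R : fieldType) n s (a : nat -> 'I_(msz s) -> 'M[R]_n) k p j :
  rmx a k p j = if ~~ odd (blk p) then a k (bix p).1 (pos p) j else 0.
Proof. by rewrite mxE /blk /pos; case: (bix p) => bp rp. Qed.

Lemma Q_E (R : fieldType) n s (a : nat -> 'I_(msz s) -> 'M[R]_n) k c :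
  (c < s.*2)%N -> Qmx a k *m Emx R s n c = Emx R s n c.+1.
Proof.
move=> hc; apply/matrixP => q r; rewrite mulmxE_r; last by rewrite /msz; lia.
rewrite QmxE blk_idx pos_idx inordK; last by rewrite /msz; lia.
rewrite mxE; have -> : (c == s.*2)%N = false by apply/eqP; lia.
by case: (blk q == c.+1).
Qed.

Lemma Q_Elast (R : fieldType) n s (a : nat -> 'I_(msz s) -> 'M[R]_n) k :
  Qmx a k *m Emx R s n s.*2 = \sum_(b < msz s) Emx R s n b *m a k b.
Proof.
apply/matrixP => q r; rewrite mulmxE_r; last by rewrite /msz.
rewrite QmxE blk_idx pos_idx inordK; last by rewrite /msz.
rewrite eqxx summxE (bigD1 (bix q).1) //= mulmxE_l eqxx big1 ?addr0 // => b hb.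
by rewrite mulmxE_l /blk; case: eqP => // h; case/eqP: hb; apply: val_inj.
Qed.

Lemma rmx_sum (R : fieldType) n s (a : nat -> 'I_(msz s) -> 'M[R]_n) k :
  rmx a k = \sum_(b < msz s | ~~ odd b) Emx R s n b *m a k b.
Proof.
apply/matrixP => q r; rewrite rmxE summxE.
case: ifP => ho.
  rewrite (bigD1 (bix q).1) //= mulmxE_l eqxx big1 ?addr0 // => b /andP[_ hb].
  by rewrite mulmxE_l /blk; case: eqP => // h; case/eqP: hb; apply: val_inj.
rewrite big1 // => b hb; rewrite mulmxE_l /blk; case: eqP => // h.
by move: ho hb; rewrite /blk h => ->.
Qed.


Definition Xm (R : fieldType) n s (a : nat -> 'I_(msz s) -> 'M[R]_n) k p : 'M[R]_(msz s * n, n) :=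
  Qprod a k (p - s.*2) *m Emx R s n (minn p s.*2).

Lemma Xlow (R : fieldType) n s (a : nat -> 'I_(msz s) -> 'M[R]_n) k p :
  (p <= s.*2)%N -> Xm a k p = Emx R s n p.
Proof.
move=> hp; rewrite /Xm; have -> : (p - s.*2 = 0)%N by lia.
by rewrite /= mul1mx; congr Emx; lia.
Qed.

Lemma Qprod_E (R : fieldType) n s (a : nat -> 'I_(msz s) -> 'M[R]_n) k l c :
  (c <= s.*2)%N -> Qprod a k l *m Emx R s n c = Xm a k (l + c).
Proof.
elim: l c => [|l IH] c hc.
  by rewrite add0n Xlow //= mul1mx.
rewrite /= -mulmxA.
have [hlt|heq] : (c < s.*2)%N \/ c = s.*2 by lia.
  rewrite Q_E // IH; last by lia.
  by congr Xm; lia.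
rewrite heq /Xm.
have -> : (l.+1 + s.*2 - s.*2 = l.+1)%N by lia.
have -> : minn (l.+1 + s.*2) s.*2 = s.*2 by lia.
by rewrite /= mulmxA.

Qed.

Lemma Xrec (R : fieldType) n s (a : nat -> 'I_(msz s) -> 'M[R]_n) k j :
  Xm a k (j + msz s) = \sum_(b < msz s) Xm a k (j + b) *m a (k + j) b.
Proof.
have -> : Xm a k (j + msz s) = Qprod a k j.+1 *m Emx R s n s.*2.
  by rewrite /Xm /msz; congr (Qprod _ _ _ *m Emx _ _ _ _); lia.
rewrite /= -mulmxA Q_Elast mulmx_sumr; apply: eq_bigr => b _.
by rewrite mulmxA Qprod_E //; have := ltn_ord b; rewrite /msz; lia.
Qed.

Lemma Fform (R : fieldType) n s (a : nat -> 'I_(msz s) -> 'M[R]_n) k L :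
  Fmx a k L = \sum_(b < msz s | ~~ odd b) Xm a k (L + b) *m a (k + L) b.
Proof.
rewrite /Fmx rmx_sum mulmx_sumr; apply: eq_bigr => b _.
by rewrite mulmxA Qprod_E //; have := ltn_ord b; rewrite /msz; lia.
Qed.



Lemma window (R : nmodType) (F : nat -> R) N L w :
  (forall p, ((p < L)%N || (L + w <= p)%N) -> F p = 0) -> (L + w <= N)%N ->
  \sum_(p < N) F p = \sum_(b < w) F (L + b)%N.
Proof.
move=> hF hN; rewrite -(big_mkord xpredT) (big_cat_nat (n:=L)) /=; [|lia|lia].
rewrite (big_cat_nat (n:=L + w) (m:=L)) /=; [|lia|lia].
rewrite [X in X + _]big1_seq ?add0r; last first.
  by move=> p; rewrite mem_index_iota => h; apply: hF; lia.
rewrite [X in _ + X]big1_seq ?addr0; last first.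
  by move=> p; rewrite mem_index_iota => h; apply: hF; lia.
rewrite -{1}[L]add0n big_addn addKn big_mkord; apply: eq_bigr => b _.
by rewrite addnC.
Qed.

Definition gE (R : fieldType) n s (a : nat -> 'I_(msz s) -> 'M[R]_n) k (L p : nat) (r c : 'I_n) : R :=
  if (L <= p)%N && (p - L <= s.*2)%N && ~~ odd (p - L)
  then a (k + L)%N (@inord s.*2 (p - L)) r c else 0.

Definition hE (R : fieldType) n s (a : nat -> 'I_(msz s) -> 'M[R]_n) k (j p : nat) (r c : 'I_n) : R :=
  if (p == j + msz s)%N then (r == c)%:R
  else if (j <= p)%N && (p - j <= s.*2)%N then - a (k + j)%N (@inord s.*2 (p - j)) r c else 0.

Lemma sum_two (R : fieldType) n s (T : nat -> 'I_n -> R) (X : nat -> R) (Y : nat -> 'I_n -> R) :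
  \sum_(q : 'I_(msz s * n)) (Y (blk q) (pos q) * T (blk q) (pos q)
     + Y (blk q + msz s)%N (pos q) * T (blk q + msz s)%N (pos q))
  = \sum_(p < msz s + msz s) \sum_(r < n) Y p r * T p r.
Proof.
rewrite sum_bix big_split_ord /= -big_split /=; apply: eq_bigr => b _.
rewrite -big_split /=; apply: eq_bigr => r _.
by rewrite blk_idx pos_idx addnC.
Qed.

Lemma Gsum (R : fieldType) n s (a : nat -> 'I_(msz s) -> 'M[R]_n) k L q c :
  (L <= msz s)%N ->
  \sum_(p < msz s + msz s) \sum_(r < n) Xm a k p q r * gE a k L p r c = Fmx a k L q c.
Proof.
move=> hL; rewrite (@window _ (fun p => \sum_(r < n) Xm a k p q r * gE a k L p r c) _ L (msz s)); last by lia.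
  rewrite Fform summxE (bigID (fun b : 'I_(msz s) => ~~ odd b)) /=.
  rewrite [X in _ + X]big1 ?addr0 => [|b /negbNE hb].
    apply: eq_bigr => b hb; rewrite mxE; apply: eq_bigr => r _.
    rewrite /gE addKn hb leq_addr /=; have hb' : (b <= s.*2)%N := ltn_ord b.
    rewrite hb'.
    by rewrite /= inord_val.
  rewrite big1 // => r _; rewrite /gE addKn hb andbF mulr0 //.
move=> p hp; rewrite big1 // => r _; rewrite /gE.
have -> : ((L <= p)%N && (p - L <= s.*2)%N) = false by rewrite /msz in hp; lia.
by rewrite mulr0.
Qed.

Lemma Hsum (R : fieldType) n s (a : nat -> 'I_(msz s) -> 'M[R]_n) k j q c :
  (j <= s.*2)%N ->
  \sum_(p < msz s + msz s) \sum_(r < n) Xm a k p q r * hE a k j p r c = 0.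
Proof.
move=> hj; rewrite (@window _ (fun p => \sum_(r < n) Xm a k p q r * hE a k j p r c) _ j (msz s).+1); last by rewrite /msz; lia.
  rewrite big_ord_recr /=.
  have -> : \sum_(r < n) Xm a k (j + msz s) q r * hE a k j (j + msz s) r c = Xm a k (j + msz s) q c.
    rewrite (bigD1 c) //= /hE eqxx eqxx mulr1 big1 ?addr0 // => r hr.
    by rewrite (negbTE hr) mulr0.
  rewrite Xrec summxE -big_split big1 //= => b _.
  rewrite mxE -big_split big1 //= => r _.
  have hb : (b <= s.*2)%N := ltn_ord b.
  rewrite /hE addKn leq_addr /=.
  rewrite eqn_add2l (ltn_eqF (ltn_ord b)).
  rewrite hb /= inord_val mulrN addNr //.
move=> p hp; rewrite big1 // => r _; rewrite /hE.
have -> : (p == j + msz s)%N = false by apply/eqP; rewrite /msz in hp *; lia.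
have -> : ((j <= p)%N && (p - j <= s.*2)%N) = false by rewrite /msz in hp; lia.
by rewrite mulr0.
Qed.



Lemma val_bix m n (q : 'I_(m * n)) : val q = (blk q * n + pos q)%N.
Proof. by rewrite -{1}[q]idx_bix val_mxvec_index. Qed.

Lemma lex_lt m n (q q' : 'I_(m * n)) : (q < q')%N ->
  (blk q <= blk q')%N /\ (blk q = blk q' -> (pos q < pos q')%N).
Proof.
rewrite !val_bix => h; have := ltn_ord (pos q); have := ltn_ord (pos q').
split; first by nia. by move=> e; rewrite e in h; lia.
Qed.




Definition q0 n s rho (i : 'I_n) : 'I_(msz s * n) := mxvec_index (@inord s.*2 rho) i.
Definition outL n s rho (i : 'I_n) (q : 'I_(msz s * n)) : nat := if q == q0 s rho i then msz s else blk q.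
Definition outc n s rho (i j : 'I_n) (q : 'I_(msz s * n)) : 'I_n := if q == q0 s rho i then j else pos q.

Definition G1 (R : fieldType) n s (a : nat -> 'I_(msz s) -> 'M[R]_n) k rho (i j : 'I_n) : 'M[R]_(msz s * n) :=
  \matrix_(q, q') gE a k (outL rho i q') (blk q) (pos q) (outc rho i j q').
Definition G2 (R : fieldType) n s (a : nat -> 'I_(msz s) -> 'M[R]_n) k rho (i j : 'I_n) : 'M[R]_(msz s * n) :=
  \matrix_(q, q') gE a k (outL rho i q') (blk q + msz s) (pos q) (outc rho i j q').
Definition H1 (R : fieldType) n s (a : nat -> 'I_(msz s) -> 'M[R]_n) k : 'M[R]_(msz s * n) :=
  \matrix_(q, q') hE a k (blk q') (blk q) (pos q) (pos q').
Definition H2 (R : fieldType) n s (a : nat -> 'I_(msz s) -> 'M[R]_n) k : 'M[R]_(msz s * n) :=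
  \matrix_(q, q') hE a k (blk q') (blk q + msz s) (pos q) (pos q').
Definition Zm (R : fieldType) n s (a : nat -> 'I_(msz s) -> 'M[R]_n) k : 'M[R]_(msz s * n) :=
  \matrix_(q, q') Xm a k (blk q' + msz s) q (pos q').
Definition Nmod (R : fieldType) n s (a : nat -> 'I_(msz s) -> 'M[R]_n) k rho (i j : 'I_n) : 'M[R]_(msz s * n) :=
  \matrix_(p, q) if (val (bix q).1 == rho) && ((bix q).2 == i)
                      then Fmx a k (msz s) p j
                      else Nmx a k p q.

Lemma blk_le2s n s (q : 'I_(msz s * n)) : (blk q <= s.*2)%N.
Proof. exact: (blk_lt q). Qed.

Lemma outL_le n s rho (i : 'I_n) (q : 'I_(msz s * n)) : (outL rho i q <= msz s)%N.
Proof. by rewrite /outL; case: eqP => // _; exact: ltnW (blk_lt q). Qed.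

Lemma Emx_blk (R : fieldType) n s (q q'' : 'I_(msz s * n)) :
  Emx R s n (blk q'') q (pos q'') = (q == q'')%:R.
Proof. by rewrite mxE bix_eq. Qed.

Lemma NmodE (R : fieldType) n s (a : nat -> 'I_(msz s) -> 'M[R]_n) k rho (i j : 'I_n) :
  (rho < msz s)%N ->
  Nmod a k rho i j = \matrix_(p, q) Fmx a k (outL rho i q) p (outc rho i j q).
Proof.
move=> hr; apply/matrixP => p q; rewrite !mxE /outL /outc bix_eq /q0 blk_idx pos_idx inordK //.
by rewrite /blk /pos; case: ifP => _ //; rewrite mxE.
Qed.

Lemma GZ (R : fieldType) n s (a : nat -> 'I_(msz s) -> 'M[R]_n) k rho (i j : 'I_n) :
  (rho < msz s)%N ->
  G1 a k rho i j + Zm a k *m G2 a k rho i j = Nmod a k rho i j.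
Proof.
move=> hr; rewrite NmodE //; apply/matrixP => q q'.
rewrite [RHS]mxE -(Gsum a k q (outc rho i j q') (outL_le rho i q')).
rewrite -(@sum_two R n s (fun p r => gE a k (outL rho i q') p r (outc rho i j q')) (fun _ => 0)
   (fun p r => Xm a k p q r)).
rewrite big_split /= [LHS]mxE; congr (_ + _).
  rewrite [LHS]mxE (bigD1 q) //= Xlow ?blk_le2s // Emx_blk eqxx mul1r big1 ?addr0 //.
  by move=> q'' h; rewrite Xlow ?blk_le2s // Emx_blk eq_sym (negbTE h) mul0r.
by rewrite [LHS]mxE; apply: eq_bigr => q'' _; rewrite !mxE.
Qed.

Lemma HZ (R : fieldType) n s (a : nat -> 'I_(msz s) -> 'M[R]_n) k :
  H1 a k + Zm a k *m H2 a k = 0.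
Proof.
apply/matrixP => q q'.
rewrite [RHS]mxE -(@Hsum _ _ _ a k (blk q') q (pos q') (blk_le2s q')).
rewrite -(@sum_two R n s (fun p r => hE a k (blk q') p r (pos q')) (fun _ => 0)
   (fun p r => Xm a k p q r)).
rewrite big_split /= [LHS]mxE; congr (_ + _).
  rewrite [LHS]mxE (bigD1 q) //= Xlow ?blk_le2s // Emx_blk eqxx mul1r big1 ?addr0 //.
  by move=> q'' h; rewrite Xlow ?blk_le2s // Emx_blk eq_sym (negbTE h) mul0r.
by rewrite [LHS]mxE; apply: eq_bigr => q'' _; rewrite !mxE.
Qed.

Lemma detH2 (R : fieldType) n s (a : nat -> 'I_(msz s) -> 'M[R]_n) k :
  \det (H2 a k) = 1.
Proof.
rewrite -det_tr det_trig.
  rewrite big1 // => q _; rewrite !mxE /hE eqxx eqxx //.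
apply/is_trig_mxP => q q' hlt; rewrite !mxE /hE.
have [hb hp] := lex_lt hlt.
case: eqP => [e|ne].
  have e' : blk q = blk q' by lia.
  by have := hp e'; case: eqP => // ->; rewrite ltnn.
have -> : ((blk q <= blk q' + msz s)%N && (blk q' + msz s - blk q <= s.*2)%N) = false.
  by have hm : msz s = s.*2.+1 by []; lia.
by [].
Qed.

Definition Bbig (R : fieldType) n s (a : nat -> 'I_(msz s) -> 'M[R]_n) k rho (i j : 'I_n) :=
  block_mx (G1 a k rho i j) (H1 a k) (G2 a k rho i j) (H2 a k).

Lemma detBbig (R : fieldType) n s (a : nat -> 'I_(msz s) -> 'M[R]_n) k rho (i j : 'I_n) :
  (rho < msz s)%N -> \det (Bbig a k rho i j) = Ddet a k rho i j.
Proof.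
move=> hr.
have : \det (block_mx 1 (Zm a k) 0 1 *m Bbig a k rho i j) = \det (Bbig a k rho i j).
  by rewrite det_mulmx det_ublock !det1 !mul1r.
rewrite /Bbig mulmx_block !mul1mx !mul0mx !add0r GZ // HZ det_lblock detH2 mulr1.
by move=> <-.
Qed.



Definition sig (s p : nat) : int := (p./2)%:Z + (s.+1)%:Z * (odd p)%:Z.
Definition cz (s b : nat) : int := (b./2)%:Z - (s * odd b)%:Z.

Lemma scale_cz (R : fieldType) (t : R) (ht : t != 0) s (b : nat) :
  (if odd b then t ^+ (b./2) / t ^+ s else t ^+ (b./2)) = t ^ cz s b.
Proof.
rewrite /cz; case: (odd b) => /=; last by rewrite muln0 subr0 exprnP.
by rewrite muln1 expfzDr // -invr_expz -!exprnP.
Qed.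

Lemma cz_m s : cz s (msz s) = 0.
Proof. by rewrite /cz /msz /= uphalf_double odd_double /= muln1 subrr. Qed.

Lemma sig_even s L b : ~~ odd b -> sig s (L + b) = sig s L + (b./2)%:Z.
Proof.
move=> hb; rewrite /sig halfD oddD (negbTE hb) andbF addbF add0n PoszD.
by rewrite -!addrA [X in _ + X]addrC.
Qed.

Lemma sig_odd s L b : odd b ->
  sig s (L + b) - sig s L - (msz s)%:Z * (~~ odd L)%:Z = cz s b.
Proof.
move=> hb; rewrite /sig /cz /msz halfD oddD hb andbT addbT.
case: (odd L) => /=; rewrite ?muln1; lia.
Qed.

Lemma scal_entry (R : fieldType) (t : R) (ht : t != 0) (x y e : int) (v : R) :
  (v != 0 -> x + y = e) -> t ^ x * v * t ^ y = t ^ e * v.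
Proof.
have [->|nz] := eqVneq v 0; first by rewrite !mulr0 mul0r.
by move=> /(_ isT) <-; rewrite mulrAC -expfzDr.
Qed.

Lemma gE_scale (R : fieldType) n s (a : nat -> 'I_(msz s) -> 'M[R]_n) (t : R) (ht : t != 0) k L p r c :
  gE (scale_coef t a) k L p r c = t ^ cz s (p - L) * gE a k L p r c.
Proof.
rewrite /gE; case: ifP => h; last by rewrite mulr0.
rewrite /scale_coef mxE scale_cz // inordK //; by move: h => /andP[/andP[_ h] _]; rewrite ltnS.
Qed.

Lemma hE_scale (R : fieldType) n s (a : nat -> 'I_(msz s) -> 'M[R]_n) (t : R) (ht : t != 0) k j p r c :
  hE (scale_coef t a) k j p r c = t ^ cz s (p - j) * hE a k j p r c.
Proof.
rewrite /hE; case: eqP => [->|_].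
  by rewrite addKn cz_m expr0z mul1r.
case: ifP => h; last by rewrite mulr0.
rewrite /scale_coef mxE scale_cz // inordK ?mulrN //; by move: h => /andP[_ h]; rewrite ltnS.
Qed.

Lemma EG (R : fieldType) n s (a : nat -> 'I_(msz s) -> 'M[R]_n) (t : R) (ht : t != 0) k L p r c :
  t ^ sig s p * gE a k L p r c * t ^ (- sig s L) = t ^ cz s (p - L) * gE a k L p r c.
Proof.
apply: scal_entry => //; rewrite /gE; case: ifP => [/andP[/andP[h1 _] h3] _|]; last by rewrite eqxx.
rewrite -{1}(subnKC h1) sig_even // /cz (negbTE h3) muln0 subr0.
by rewrite addrAC subrr add0r.
Qed.

Lemma EW (R : fieldType) n s (a : nat -> 'I_(msz s) -> 'M[R]_n) (t : R) (ht : t != 0) k j p r c :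
  t ^ sig s p * (gE a k j p r c + hE a k j p r c) * t ^ (- sig s j - (msz s)%:Z * (~~ odd j)%:Z)
  = t ^ cz s (p - j) * (gE a k j p r c + hE a k j p r c).
Proof.
apply: scal_entry => // hnz.
have key : forall b, odd b -> p = (j + b)%N -> sig s p + (- sig s j - (msz s)%:Z * (~~ odd j)%:Z) = cz s (p - j).
  by move=> b hb ->; rewrite addKn -(@sig_odd s j b hb) !addrA.
move: hnz; rewrite /gE /hE.
have [hp|hp] := eqVneq p (j + msz s)%N.
  by move=> _; apply: (key (msz s)) => //; rewrite /msz /= odd_double.
case hA: ((j <= p)%N && (p - j <= s.*2)%N); last by rewrite /= addr0 eqxx.
move: hA => /andP[h1 h2].
case ho: (odd (p - j)); first by move=> _; have := @sig_odd s j (p - j) ho; rewrite subnKC //; lia.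
by rewrite /= addrN eqxx.
Qed.

Lemma EH (R : fieldType) n s (a : nat -> 'I_(msz s) -> 'M[R]_n) (t : R) (ht : t != 0) k j p r c :
  odd j ->
  t ^ sig s p * hE a k j p r c * t ^ (- sig s j - (msz s)%:Z * (~~ odd j)%:Z)
  = t ^ cz s (p - j) * hE a k j p r c.
Proof.
move=> hj; apply: scal_entry => // hnz.
have key : forall b, odd b -> p = (j + b)%N -> sig s p + (- sig s j - (msz s)%:Z * (~~ odd j)%:Z) = cz s (p - j).
  by move=> b hb ->; rewrite addKn -(@sig_odd s j b hb) !addrA.
move: hnz; rewrite /hE.
have [hp _|hp] := eqVneq p (j + msz s)%N.
  by apply: (key (msz s)) => //; rewrite /msz /= odd_double.
case: ifP => [/andP[h1 h2] _|]; last by rewrite eqxx.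
case ho: (odd (p - j)); first by have := @sig_odd s j (p - j) ho; rewrite subnKC //; lia.
rewrite -{1}(subnKC h1) sig_even ?ho // hj /= mulr0 subr0 /cz ho muln0 subr0.
lia.
Qed.



Definition Dm (R : fieldType) n s rho (i : 'I_n) : 'M[R]_(msz s * n) :=
  \matrix_(q, q') ((q == q') && (q != q0 s rho i))%:R.

Lemma mulDm (R : fieldType) n s rho (i : 'I_n) (A : 'M[R]_(msz s * n)) q q' :
  (A *m Dm R s rho i) q q' = if q' == q0 s rho i then 0 else A q q'.
Proof.
rewrite mxE (bigD1 q') //= mxE eqxx /= big1 ?addr0 => [|q'' h]; last first.
  by rewrite mxE (negbTE h) mulr0.
by case: ifP => _; rewrite ?mulr0 ?mulr1.
Qed.

Lemma diag_entry (R : fieldType) N (d e : 'rV[R]_N) (A : 'M[R]_N) q q' :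
  (diag_mx d *m A *m diag_mx e) q q' = d 0 q * A q q' * e 0 q'.
Proof. by rewrite mul_diag_mx mul_mx_diag !mxE. Qed.

Definition f1 (R : fieldType) n s (t : R) : 'rV[R]_(msz s * n) := \row_(q < msz s * n) t ^ sig s (blk q).
Definition f2 (R : fieldType) n s (t : R) : 'rV[R]_(msz s * n) := \row_(q < msz s * n) t ^ sig s (blk q + msz s).
Definition g1 (R : fieldType) n s (t : R) rho (i : 'I_n) : 'rV[R]_(msz s * n) :=
  \row_(q < msz s * n) t ^ (- sig s (outL rho i q)).
Definition g2 (R : fieldType) n s (t : R) : 'rV[R]_(msz s * n) :=
  \row_(q < msz s * n) t ^ (- sig s (blk q) - (msz s)%:Z * (~~ odd (blk q))%:Z).

Lemma sG1 (R : fieldType) n s (a : nat -> 'I_(msz s) -> 'M[R]_n) (t : R) (ht : t != 0) k rho (i j : 'I_n) :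
  G1 (scale_coef t a) k rho i j = diag_mx (f1 n s t) *m G1 a k rho i j *m diag_mx (g1 s t rho i).
Proof. by apply/matrixP => q q'; rewrite diag_entry !mxE gE_scale // EG. Qed.

Lemma sG2 (R : fieldType) n s (a : nat -> 'I_(msz s) -> 'M[R]_n) (t : R) (ht : t != 0) k rho (i j : 'I_n) :
  G2 (scale_coef t a) k rho i j = diag_mx (f2 n s t) *m G2 a k rho i j *m diag_mx (g1 s t rho i).
Proof. by apply/matrixP => q q'; rewrite diag_entry !mxE gE_scale // EG. Qed.

Lemma Wentry (R : fieldType) n s (a : nat -> 'I_(msz s) -> 'M[R]_n) (t : R) (ht : t != 0) k rho (i j : 'I_n)
  (hodd : odd rho) (hr : (rho < msz s)%N) (q' : 'I_(msz s * n)) p r :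
  (if q' == q0 s rho i then 0 else gE (scale_coef t a) k (outL rho i q') p r (outc rho i j q'))
     + hE (scale_coef t a) k (blk q') p r (pos q') =
  t ^ sig s p * ((if q' == q0 s rho i then 0 else gE a k (outL rho i q') p r (outc rho i j q'))
     + hE a k (blk q') p r (pos q')) * t ^ (- sig s (blk q') - (msz s)%:Z * (~~ odd (blk q'))%:Z).
Proof.
rewrite /outL /outc; case: eqP => [->|_].
  rewrite !add0r hE_scale // EH //.
  by rewrite /q0 blk_idx inordK.
by rewrite gE_scale // hE_scale // -mulrDr EW.
Qed.

Lemma sW1 (R : fieldType) n s (a : nat -> 'I_(msz s) -> 'M[R]_n) (t : R) (ht : t != 0) k rho (i j : 'I_n)
  (hodd : odd rho) (hr : (rho < msz s)%N) :
  G1 (scale_coef t a) k rho i j *m Dm R s rho i + H1 (scale_coef t a) k =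
  diag_mx (f1 n s t) *m (G1 a k rho i j *m Dm R s rho i + H1 a k) *m diag_mx (g2 n s t).
Proof.
apply/matrixP => q q'; rewrite diag_entry [LHS]mxE [X in _ * X * _]mxE !mulDm !mxE.
exact: Wentry.
Qed.

Lemma sW2 (R : fieldType) n s (a : nat -> 'I_(msz s) -> 'M[R]_n) (t : R) (ht : t != 0) k rho (i j : 'I_n)
  (hodd : odd rho) (hr : (rho < msz s)%N) :
  G2 (scale_coef t a) k rho i j *m Dm R s rho i + H2 (scale_coef t a) k =
  diag_mx (f2 n s t) *m (G2 a k rho i j *m Dm R s rho i + H2 a k) *m diag_mx (g2 n s t).
Proof.
apply/matrixP => q q'; rewrite diag_entry [LHS]mxE [X in _ * X * _]mxE !mulDm !mxE.
exact: Wentry.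
Qed.

Definition Vm (R : fieldType) n s (a : nat -> 'I_(msz s) -> 'M[R]_n) k rho (i j : 'I_n) :=
  Bbig a k rho i j *m block_mx 1 (Dm R s rho i) 0 1.

Lemma Vblock (R : fieldType) n s (a : nat -> 'I_(msz s) -> 'M[R]_n) k rho (i j : 'I_n) :
  Vm a k rho i j = block_mx (G1 a k rho i j) (G1 a k rho i j *m Dm R s rho i + H1 a k)
                            (G2 a k rho i j) (G2 a k rho i j *m Dm R s rho i + H2 a k).
Proof. by rewrite /Vm /Bbig mulmx_block !mulmx1 !mulmx0 !addr0. Qed.

Lemma detV (R : fieldType) n s (a : nat -> 'I_(msz s) -> 'M[R]_n) k rho (i j : 'I_n) :
  \det (Vm a k rho i j) = \det (Bbig a k rho i j).
Proof. by rewrite /Vm det_mulmx det_ublock !det1 !mulr1. Qed.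

Lemma Vscale (R : fieldType) n s (a : nat -> 'I_(msz s) -> 'M[R]_n) (t : R) (ht : t != 0) k rho (i j : 'I_n)
  (hodd : odd rho) (hr : (rho < msz s)%N) :
  Vm (scale_coef t a) k rho i j =
  block_mx (diag_mx (f1 n s t)) 0 0 (diag_mx (f2 n s t)) *m Vm a k rho i j
    *m block_mx (diag_mx (g1 s t rho i)) 0 0 (diag_mx (g2 n s t)).
Proof.
rewrite [LHS]Vblock sW1 // sW2 // sG1 // sG2 // Vblock !mulmx_block.
by rewrite !mul0mx !mulmx0 !addr0 !add0r.
Qed.



Lemma odd_m s : odd (msz s).
Proof. by rewrite /msz /= odd_double. Qed.

Lemma prod_pots (R : fieldType) n s (t : R) (ht : t != 0) rho (i : 'I_n)
  (hodd : odd rho) (hr : (rho < msz s)%N) :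
  (\prod_q (f1 n s t) 0 q * \prod_q (f2 n s t) 0 q) * (\prod_q (g1 s t rho i) 0 q * \prod_q (g2 n s t) 0 q)
  = t ^ (sig s rho - sig s (msz s)).
Proof.
rewrite -!big_split /= (bigD1 (q0 s rho i)) //= big1 ?mulr1 => [|q hq].
  rewrite !mxE /outL eqxx /q0 blk_idx inordK // -!expfzDr //; congr (_ ^ _).
  have := @sig_odd s rho (msz s) (odd_m s).
  rewrite cz_m hodd /= => h; lia.
rewrite !mxE /outL (negbTE hq) -!expfzDr // -(expr0z t); congr (_ ^ _).
have := @sig_odd s (blk q) (msz s) (odd_m s).
rewrite cz_m => h; lia.
Qed.

Unset Implicit Arguments.

Theorem mainTheorem8 (R : realFieldType) (n s N : nat) (hn : (1 <= n)%N)
  (hs : (1 <= s)%N) (hN : (1 <= N)%N)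
  (a : nat -> 'I_(msz s) -> 'M[R]_n)
  (hper : forall k, a (k + N)%N = a k)
  (k : nat) (i j : 'I_n) (l : nat) (hl : (l < s)%N) (t : R) (ht : 0 < t) :
  Ddet (scale_coef t a) k l.*2.+1 i j = t ^+ l / t ^+ s * Ddet a k l.*2.+1 i j.
Proof.
have ht0 : t != 0 by rewrite gt_eqF.
have hodd : odd l.*2.+1 by rewrite /= odd_double.
have hr : (l.*2.+1 < msz s)%N by rewrite /msz ltnS ltn_double.
rewrite -!detBbig // -!detV Vscale // !det_mulmx !det_ublock !det_diag.
rewrite !det1 !mulr1 mulrAC; congr (_ * _); rewrite prod_pots //.
have -> : sig s l.*2.+1 - sig s (msz s) = l%:Z - s%:Z.
  rewrite /sig /msz /= !uphalf_double !odd_double /=; lia.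
by rewrite expfzDr // -invr_expz -!exprnP.
Qed.
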